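(* Let $Y_1,Y_2,\ldots$ be i.i.d. Bernoulli$(1/2)$ and let $(Z^k)_k$ be generated by the bit-drop scheme described in the context, independently of $(Y_i)$; let $L^a_n(k)$ be the length of a longest common subsequence of $Z^k$ and $Y_1\ldots Y_n$. There is a constant $c>0$ such that for every $n$ and every $\nu<0.5$ with $\nu n$ a nonnegative integer, $$P\big(L^a_n(\nu n)=\nu n\big)\geq 1-e^{-c(0.5-\nu)^2n}.$$
   Context: Bit-drop scheme: let $V_1,V_2,\ldots$ be i.i.d. Bernoulli$(1/2)$ and let $T_3,T_4,\ldots$ be independent, independent of $(V_k)$, with $T_{k+1}$ uniform on $\{2,\ldots,k\}$. Set $Z^2:=V_1V_2$ and, given $Z^k=Z^k_1\ldots Z^k_k$, define $Z^{k+1}_j:=Z^k_j$ for $j<T_{k+1}$, $Z^{k+1}_{T_{k+1}}:=V_{k+1}$, $Z^{k+1}_j:=Z^k_{j-1}$ for $T_{k+1}<j\le k+1$. Convention: $Z^0$ empty, $Z^1:=V_1$. *)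

(* Defs.v *)
From HB Require Import structures.
From mathcomp Require Import all_boot all_order all_algebra.
From mathcomp Require Import reals sequences exp.
Set Implicit Arguments. Unset Strict Implicit. Unset Printing Implicit Defensive.
Import Order.TTheory GRing.Theory Num.Theory.
Local Open Scope ring_scope.

(* Bit-drop scheme, deterministic part: given the bits V (V i = V_i, i >= 1)
   and the insertion positions T (T i = T_i, i >= 3), Z k = Z^k. *)
Fixpoint Zbits (V : nat -> bool) (T : nat -> nat) (k : nat) : seq bool :=
  match k with
  | 0 => [::]
  | k'.+1 =>
      let z := Zbits V T k' in
      if (k' < 2)%N then rcons z (V k)
      else take (T k).-1 z ++ V k :: drop (T k).-1 z
  end.

Definition lcs_len (a b : seq bool) : nat :=
  \max_(m : (size a).-tuple bool | subseq (mask m a) b) size (mask m a).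

(* Finite sample space for (V_1..V_k, T_1..T_k, Y_1..Y_n).  Entry j (0-based)
   of the tuples stores the variable with index j+1.  T_1, T_2 are unused
   (fixed to 0); T_{j+1} ranges over {2,...,j} for j >= 2. *)
Definition Omega (k n : nat) : finType :=
  (k.-tuple bool * k.-tuple 'I_k.+1 * n.-tuple bool)%type.

Definition validT (k : nat) (t : k.-tuple 'I_k.+1) : bool :=
  [forall j : 'I_k, if (2 <= j)%N then (2 <= tnth t j <= j)%N
                    else (nat_of_ord (tnth t j) == 0)%N].

Definition Vfun k (v : k.-tuple bool) (i : nat) : bool := nth false v i.-1.
Definition Tfun k (t : k.-tuple 'I_k.+1) (i : nat) : nat :=
  nat_of_ord (nth ord0 t i.-1).

(* Uniform (product) probability on the admissible outcomes: since all the
   variables are independent and uniform on finite sets, their joint law is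
   uniform on the product of these sets. *)
Definition admissible k n (w : Omega k n) : bool := validT w.1.2.

Definition unif_prob (R : realType) (T : finType) (S A : pred T) : R :=
  (#|[pred w | S w && A w]|%:R) / (#|[pred w | S w]|%:R).

Definition Lan k n (w : Omega k n) : nat :=
  lcs_len (Zbits (Vfun w.1.1) (Tfun w.1.2) k) w.2.

Definition prob_L_full (R : realType) (k n : nat) : R :=
  unif_prob R (@admissible k n) (fun w => Lan w == k).

(* Main.v *)
Require Import Defs.
From HB Require Import structures.
From mathcomp Require Import all_boot all_order all_algebra.
From mathcomp Require Import reals sequences exp.
From mathcomp Require Import ring lra.
Import Order.TTheory GRing.Theory Num.Theory.
Lemma size_Zbits V T k : size (Zbits V T k) = k.
Proof.
elim: k => //= k IH; case: ifP => _.
  by rewrite size_rcons IH.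
by rewrite size_cat /= addnS -size_cat cat_take_drop IH.
Qed.

Lemma lcs_full a b : subseq a b -> lcs_len a b = size a.
Proof.
move=> sab; apply/eqP; rewrite eqn_leq; apply/andP; split.
  by apply/bigmax_leqP => m _; apply: size_subseq; apply: mask_subseq.
have := @leq_bigmax_cond _ (fun m : (size a).-tuple bool => subseq (mask m a) b)
   (fun m : (size a).-tuple bool => size (mask m a)) (nseq_tuple (size a) true).
by rewrite /= mask_true //; apply.
Qed.

Lemma sum_tupleS (T : finType) n (F : n.+1.-tuple T -> nat) :
  \sum_(y : n.+1.-tuple T) F y = \sum_(b : T) \sum_(y : n.-tuple T) F [tuple of b :: y].
Proof.
rewrite pair_big /=.
rewrite (reindex (fun p : T * n.-tuple T => [tuple of p.1 :: p.2])) /=.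
  by apply: eq_bigr => -[b y].
exists (fun t : n.+1.-tuple T => (thead t, [tuple of behead t])) => /=.
  by move=> [b y] _ /=; congr pair; apply: val_inj.
move=> t _; apply: val_inj => /=.
by case: t => -[|x s] //=.
Qed.

Lemma count_nonsub n (z : seq bool) :
  \sum_(y : n.-tuple bool) ~~ subseq z y = \sum_(i < size z) 'C(n, i).
Proof.
elim: n z => [|n IH] z.
  rewrite (eq_bigr (fun _ => (~~ subseq z [::]) : nat)); last by move=> y _; rewrite tuple0.
  rewrite sum_nat_const card_tuple card_bool expn0 mul1n.
  case: z => [|a z] /=; first by rewrite big_ord0.
  by rewrite big_ord_recl /= big1 // => i _; rewrite bin0n.
case: z => [|a z].
  by rewrite big_ord0 big1 // => y _; rewrite sub0seq.
rewrite sum_tupleS big_bool /=.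
have E1 := IH z. have E2 := IH (a :: z).
rewrite /=.
have -> : \sum_(i < (size z).+1) 'C(n.+1, i) = \sum_(i < size z) 'C(n, i) + \sum_(i < (size z).+1) 'C(n, i).
  rewrite big_ord_recl [in RHS]big_ord_recl /= !bin0 addnCA; congr (_ + _).
  by rewrite -big_split /=; apply: eq_bigr => i _; rewrite binS addnC.
rewrite -E1 -E2.
by case: a {E2}; [|rewrite addnC]; congr (_ + _); apply: eq_bigr.
Qed.
Lemma card_sum (T : finType) (P : pred T) : #|[pred w | P w]| = \sum_w (P w : nat).
Proof. by rewrite -sum1_card big_mkcond /=; apply: eq_bigr => w _; rewrite inE; case: (P w). Qed.

Definition Sb k n := \sum_(i < k) 'C(n, i).

Lemma sub_plus n (z : seq bool) :
  \sum_(y : n.-tuple bool) (subseq z y : nat) + \sum_(y : n.-tuple bool) (~~ subseq z y : nat) = 2 ^ n.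
Proof.
rewrite -big_split /= (eq_bigr (fun _ => 1)); last by move=> y _; case: subseq.
by rewrite sum_nat_const card_tuple card_bool muln1.
Qed.

Lemma count_main k n :
  let a := \sum_(p : k.-tuple bool * k.-tuple 'I_k.+1) (validT p.2 : nat) in
  #|[pred w : Omega k n | admissible w]| = a * 2 ^ n /\
  a * 2 ^ n <= #|[pred w : Omega k n | admissible w && (Lan w == k)]| + a * Sb k n.
Proof.
move=> a; split.
  rewrite card_sum /admissible -(pair_big xpredT xpredT (fun p (y : n.-tuple bool) => (validT p.2 : nat))) /=.
  rewrite /a big_distrl /=; apply: eq_bigr => p _.
  by rewrite sum_nat_const card_tuple card_bool mulnC.
rewrite card_sum /admissible -(pair_big xpredT xpredT (fun p (y : n.-tuple bool) => (validT p.2 && (Lan (p, y) == k) : nat))) /=.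
rewrite /a !big_distrl -big_split /=; apply: leq_sum => p _.
case: (validT p.2); rewrite ?mul0n // !mul1n /Sb.
rewrite /Lan /=.
set z := Zbits _ _ k.
have Hz : size z = k by rewrite size_Zbits.
rewrite -Hz -count_nonsub -(sub_plus n z) leq_add2r.
apply: leq_sum => y _; case Hs: (subseq z y) => //.
by rewrite lcs_full // Hz eqxx.
Qed.
Local Open Scope ring_scope.
Lemma poly_aux (R : realType) (x:R) : 0 <= x -> x <= 1/4 -> 1 <= (1 - x) * (1 + (x + 2*x^+2)/2)^+2.
Proof.
intros.
have -> : (1 - x) * (1 + (x + 2*x^+2)/2)^+2 = 1 + x^+2 * (5/4 - 5/4 * x - x^+3) by field.
have h0 : 0 <= x^+2 by apply: sqr_ge0.
have h3 : x^+3 <= x.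
  have h1 : x <= 1 by lra.
  by rewrite -{2}(expr1 x); apply: ler_wiXn2l.
have : 0 <= 5/4 - 5/4 * x - x^+3 by lra.
move=> hP; rewrite lerDl; exact: mulr_ge0.
Qed.

Lemma tail_bound (R : realType) n k (nu : R) : (0 < n)%N -> nu < 1/2 -> nu * n%:R = k%:R ->
  (\sum_(i < k) 'C(n, i))%:R / 2^+n <= expR (- (1/4 * (1/2 - nu)^+2 * n%:R)).
Proof.
move=> n0 hnu hk.
have nR : 0 < n%:R :> R by rewrite ltr0n.
have nu0 : 0 <= nu by rewrite -(pmulr_lge0 _ nR) hk ler0n.
set e := 1/2 - nu.
have e0 : 0 < e by rewrite /e; lra.
have e1 : e <= 1/2 by rewrite /e; lra.
set t := e / 2.
have t0 : 0 <= t by rewrite /t; lra.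
have t1 : t <= 1/4 by rewrite /t; lra.
set x := 1 - t.
have x0 : 0 <= x by rewrite /x; lra.
have x1 : x <= 1 by rewrite /x; lra.
have kn : (k <= n)%N by rewrite -(ler_nat R) -hk; nra.
set S := (\sum_(i < k) 'C(n, i))%:R.
have S0 : 0 <= S by rewrite /S ler0n.
have step1 : S * x^+k <= (x+1)^+n.
  rewrite exprD1n /S natr_sum mulr_suml.
  apply: (@le_trans _ _ (\sum_(i<k) x^+i *+ 'C(n,i))).
    apply: ler_sum => i _; rewrite -[x ^+ i *+ _]mulr_natl; apply: ler_wpM2l; first exact: ler0n.
    by apply: ler_wiXn2l => //; apply: ltnW.
  rewrite (big_ord_widen n.+1 (fun i => x^+i *+ 'C(n,i))); last by apply: (leq_trans kn).

  rewrite [leLHS]big_mkcond /=; apply: ler_sum => i _; case: ifP => // _.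
  by apply: mulrn_wge0; apply: exprn_ge0.
set y := t + 2 * t^+2.
have step2 : ((x+1)/2)^+n <= expR (n%:R * (- t / 2)).
  rewrite expRM_natl; apply: lerXn2r; rewrite ?nnegrE ?expR_ge0 //; first by lra.
  by apply: le_trans (expR_ge1Dx _); rewrite /x; lra.
have step3 : 1 <= x * expR y.
  have -> : expR y = expR (y/2) ^+ 2 by rewrite -expRM_natl; congr expR; field.
  have P := @poly_aux R t t0 t1; rewrite -/x -/y in P; apply: (le_trans P); apply: ler_wpM2l => //.
  apply: lerXn2r; rewrite ?nnegrE ?expR_ge0 //; last by rewrite mulrC; apply: expR_ge1Dx.
  rewrite /y; have : 0 <= t^+2 by apply: sqr_ge0. lra.
have step4 : 1 <= x^+k * expR (k%:R * y).
  by rewrite expRM_natl -exprMn; apply: exprn_ege1.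
have step5 : S / 2^+n <= expR (n%:R * (- t / 2) + k%:R * y).
  have h2 : 0 < (2:R)^+n by apply: exprn_gt0.
  apply: (@le_trans _ _ (S * (x^+k * expR (k%:R * y)) / 2^+n)).
    by apply: ler_wpM2r; [rewrite invr_ge0 ltW | rewrite -{1}(mulr1 S); apply: ler_wpM2l].
  rewrite expRD.
  have -> : S * (x^+k * expR (k%:R * y)) / 2^+n = (S * x^+k) / 2^+n * expR (k%:R * y) by ring.
  apply: ler_wpM2r; first exact: expR_ge0.
  apply: le_trans step2; rewrite expr_div_n; apply: ler_wpM2r => //.
  by rewrite invr_ge0 ltW.
apply: (le_trans step5); rewrite ler_expR.
have hnu' : nu = 1/2 - e by rewrite /e; lra.
rewrite -hk /y /t hnu'.
have h : 0 <= e^+3 * n%:R by apply: mulr_ge0; [apply: exprn_ge0; apply: ltW|apply: ltW].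
nra.
Qed.
Lemma a_pos k : (0 < \sum_(p : k.-tuple bool * k.-tuple 'I_k.+1) (validT p.2 : nat))%N.
Proof.
pose t0 : k.-tuple 'I_k.+1 := [tuple inord (if (2 <= j)%N then nat_of_ord j else 0%N) | j < k].
have v0 : validT t0.
  apply/forallP => j; rewrite /t0 tnth_mktuple.
  have jk : (j < k.+1)%N by apply: leqW.
  case: ifP => h; rewrite inordK ?h ?leqnn //.
rewrite (bigD1 (nseq_tuple k false, t0)) //= v0; exact: ltn_addr.
Qed.

Theorem lemma14 (R : realType) :
  exists c : R, 0 < c /\
    forall (n k : nat) (nu : R),
      nu < 1 / 2 -> nu * n%:R = k%:R ->
      prob_L_full R k n >= 1 - expR (- (c * (1 / 2 - nu) ^+ 2 * n%:R)).
Proof.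
exists (1/4); split; first lra.
move=> n k nu hnu hk.
case: n hk => [|n] hk.
  rewrite mulr0 oppr0 expR0 subrr /prob_L_full /unif_prob.
  by apply: divr_ge0; apply: ler0n.
have [hA hG] := count_main k n.+1.
move: hA hG; set a := \sum_(p : _) _ => hA hG.
have a0 : (0 < a)%N by apply: a_pos.
have tb := @tail_bound R n.+1 k nu (ltn0Sn n) hnu hk.
rewrite /prob_L_full /unif_prob hA.
apply: (@le_trans _ _ (1 - (Sb k n.+1)%:R / 2^+n.+1)).
  by rewrite lerD2l lerN2.
have h2 : 0 < (2:R)^+n.+1 by apply: exprn_gt0.
have hd : 0 < (a * 2 ^ n.+1)%:R :> R by rewrite ltr0n muln_gt0 a0 expn_gt0.
rewrite ler_pdivlMr //.
move: hG; rewrite -(ler_nat R) !natrD !natrM !natrX => hG.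
have -> : (1 - (Sb k n.+1)%:R / 2 ^+ n.+1) * (a%:R * 2%:R ^+ n.+1) = a%:R * 2%:R ^+ n.+1 - a%:R * (Sb k n.+1)%:R :> R.
  by field; rewrite expf_neq0 // pnatr_eq0.
lra.
Qed.
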